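(* Let $\omega\in\mathbb Z\setminus\{0\}$, $\kappa=2\pi\omega$, $L^2_0=\{u\in L^2(\mathbb R/\mathbb Z):\int_0^1u=0\}$, and for $u\in L^2_0$ let $\mathscr Pu$ be the unique mean-zero primitive ($(\mathscr Pu)_s=u$, $\int_0^1\mathscr Pu=0$). Define the closure map $\mathscr C:L^2_0\to\mathbb C$, $\mathscr C(u)=\int_0^1\exp(i(\kappa s+\mathscr Pu(s)))\,ds$. If $u\in L^2_0$ satisfies $\mathscr C(u)=0$, then $D\mathscr C(u):L^2_0\to\mathbb C$, given by $D\mathscr C(u)[w]=i\int_0^1e^{i(\kappa s+\mathscr Pu(s))}\mathscr Pw(s)\,ds$, is surjective as a real-linear map onto $\mathbb C\cong\mathbb R^2$.
   Context: $\mathscr C(u)=0$ is precisely the condition that the curvature $k=\kappa+u$ reconstructs a closed unit-length curve (with tangent $e^{i(\kappa s+\mathscr Pu)}$) of turning number $\omega$. *)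

(* Defs.v *)
From HB Require Import structures.
From mathcomp Require Import all_boot all_order all_algebra.
From mathcomp Require Import all_classical all_reals all_analysis.
Set Implicit Arguments. Unset Strict Implicit. Unset Printing Implicit Defensive.
Import Order.TTheory GRing.Theory Num.Theory.
Local Open Scope classical_set_scope.
Local Open Scope ring_scope.

Section ClosureDefs.
Variable R : realType.

(* One period [0,1] of R/Z; functions on R/Z are represented by their values on [0,1]. *)
Definition I01 : set R := `[0%R, 1%R]%classic.

Definition L2_0 (u : R -> R) : Prop :=
  measurable_fun I01 u /\
  (@lebesgue_measure R).-integrable I01 (fun x => ((u x) ^+ 2)%:E) /\
  Rintegral (@lebesgue_measure R) I01 u = 0.

Definition prim (u : R -> R) (s : R) : R :=
  Rintegral (@lebesgue_measure R) `[0%R, s]%classic u.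

Definition Pmz (u : R -> R) (s : R) : R :=
  prim u s - Rintegral (@lebesgue_measure R) I01 (prim u).

Definition phase (omega : int) (u : R -> R) (s : R) : R :=
  2 * pi * omega%:~R * s + Pmz u s.

Definition closure_map (omega : int) (u : R -> R) : R * R :=
  (Rintegral (@lebesgue_measure R) I01 (fun s => cos (phase omega u s)),
   Rintegral (@lebesgue_measure R) I01 (fun s => sin (phase omega u s))).

(* DC(u)[w] = i int_0^1 exp(i (kappa s + P u s)) P w (s) ds, as (Re, Im):
   Re = - int sin(phase) Pw,  Im = int cos(phase) Pw. *)
Definition dclosure_map (omega : int) (u w : R -> R) : R * R :=
  (- Rintegral (@lebesgue_measure R) I01 (fun s => sin (phase omega u s) * Pmz w s),
   Rintegral (@lebesgue_measure R) I01 (fun s => cos (phase omega u s) * Pmz w s)).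

End ClosureDefs.

(* Main.v *)
Require Import Defs.
From HB Require Import structures.
From mathcomp Require Import all_boot all_order all_algebra.
From mathcomp Require Import all_classical all_reals all_analysis.
From mathcomp Require Import measurable_realfun ring lra.
Set Implicit Arguments. Unset Strict Implicit. Unset Printing Implicit Defensive.
Import Order.TTheory GRing.Theory Num.Theory.
Import numFieldNormedType.Exports.
Local Open Scope classical_set_scope.
Local Open Scope ring_scope.

Section H.
Variable R : realType.
Notation mu := (@lebesgue_measure R).
Implicit Types (f : R -> R).
Definition cw (f : R -> R) := {within `[0%R, 1%R], continuous f}.

Lemma I01E : @I01 R = `[0%R, 1%R]%classic :> set R. Proof. by []. Qed.

Lemma cw_int f : cw f -> mu.-integrable `[0%R, 1%R] (EFin \o f).
Proof. by move=> cf; apply: continuous_compact_integrable => //; exact: segment_compact. Qed.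

Lemma cw_prim f : mu.-integrable `[0%R, 1%R] (EFin \o f) -> cw (prim f).
Proof. by move=> intf; apply: (@parameterized_integral_continuous R 0 1 f). Qed.

Lemma prim0 f : prim f 0 = 0.
Proof. by rewrite /prim set_itv1 Rintegral_set1. Qed.

Lemma cw_interior f x : cw f -> 0 < x < 1 -> {for x, continuous f}.
Proof.
move=> cf x01; have := (continuous_within_itvP f (@ltr01 R)).1 cf.
by case=> + _ _; apply; rewrite in_itv.
Qed.

Lemma deriv_prim f x : cw f -> 0 < x < 1 ->
  derivable (prim f) x 1 /\ derive1 (prim f) x = f x.
Proof.
move=> cf /andP[x0 x1].
have := @continuous_FTC1_closed R f 0 x 1 x1 (cw_int cf) x0 (cw_interior cf _).
by apply; rewrite x0 x1.
Qed.

Lemma LR_prim f : cw f -> derivable_oo_LRcontinuous (prim f) 0 1.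
Proof.
move=> cf; have := (continuous_within_itvP (prim f) (@ltr01 R)).1 (cw_prim (cw_int cf)).
case=> _ h0 h1; split => // x; rewrite in_itv/= => x01.
by case: (deriv_prim cf x01).
Qed.

Lemma deriv_loc_cst (F : R -> R) (k x : R) : 0 < x < 1 ->
  (forall y, 0 < y < 1 -> F y = k) -> derive1 F x = 0.
Proof.
move=> /andP[x0 x1] Fk.
have -> : derive1 F x = derive1 (cst k : R -> R) x.
  rewrite !derive1E; apply: near_eq_derive.
  near=> y; apply: Fk; apply/andP; split.
    by near: y; exact: lt_nbhsr.
  by near: y; exact: lt_nbhsl.
by rewrite derive1_cst.
Unshelve. all: by end_near. Qed.


Lemma cwD f g : cw f -> cw g -> cw (fun x => f x + g x).
Proof. by move=> cf cg x; apply: cvgD; [exact: cf|exact: cg]. Qed.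
Lemma cwM f g : cw f -> cw g -> cw (fun x => f x * g x).
Proof. by move=> cf cg x; apply: cvgM; [exact: cf|exact: cg]. Qed.
Lemma cwC (k : R) : cw (fun _ => k).
Proof. exact: cst_continuous. Qed.
Lemma cwid : cw (fun x => x).
Proof. by apply: continuous_subspaceT => x; exact: cvg_id. Qed.
Lemma cwcos f : cw f -> cw (fun x => cos (f x)).
Proof.
move=> cf x; apply: continuous_comp; first exact: cf.
exact: continuous_cos.
Qed.
Lemma cwsin f : cw f -> cw (fun x => sin (f x)).
Proof.
move=> cf x; apply: continuous_comp; first exact: cf.
exact: continuous_sin.
Qed.
Lemma cwZ (a : R) f : cw f -> cw (fun x => a * f x).
Proof. by move=> cf; apply: cwM => //; exact: cwC. Qed.
Lemma cwL (a b : R) f g : cw f -> cw g -> cw (fun x => a * f x + b * g x).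
Proof. by move=> cf cg; apply: cwD; apply: cwZ. Qed.

Lemma Rlin f g (a b : R) : cw f -> cw g ->
  Rintegral mu `[0%R, 1%R] (fun x => a * f x + b * g x) =
  a * Rintegral mu `[0%R, 1%R] f + b * Rintegral mu `[0%R, 1%R] g.
Proof.
move=> cf cg; rewrite RintegralD //; last 2 first.
- exact/cw_int/cwZ.
- exact/cw_int/cwZ.
by rewrite !RintegralZl //; exact: cw_int.
Qed.

Lemma Rcst (k : R) : Rintegral mu `[0%R, 1%R] (fun _ => k) = k.
Proof.
rewrite Rintegral_cst //.
have h : fine (mu `[0%R, 1%R]) = 1.
  by rewrite lebesgue_measure_itv /= lte_fin ltr01 /= subr0.
by rewrite h mulr1.
Qed.

Definition good f := cw f /\ Rintegral mu `[0%R, 1%R] f = 0.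

Lemma good_L2 f : good f -> L2_0 f.
Proof.
move=> [cf m0]; split; last split => //.
- exact: (@subspace_continuous_measurable_fun R `[0%R, 1%R] f _ cf).
- exact: (cw_int (cwM cf cf)).
Qed.

Lemma goodL (a b : R) f g : good f -> good g -> good (fun x => a * f x + b * g x).
Proof.
move=> [cf f0] [cg g0]; split; first exact: cwL.
by rewrite Rlin // f0 g0 !mulr0 addr0.
Qed.


Lemma h_pihalf (p q y : R) :
  (q * cos y - p * sin y) ^+ 2 + (q * cos (y + pi / 2) - p * sin (y + pi / 2)) ^+ 2
  = p ^+ 2 + q ^+ 2.
Proof.
rewrite cosDpihalf sinDpihalf; have := cos2Dsin2 y.
set c := cos y; set s := sin y => e.
transitivity ((p ^+ 2 + q ^+ 2) * (c ^+ 2 + s ^+ 2)); first ring.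
by rewrite e mulr1.
Qed.

Lemma hit (phi : R -> R) v : cw phi ->
  (phi 0 < v < phi 1) \/ (phi 1 < v < phi 0) -> exists c, 0 < c < 1 /\ phi c = v.
Proof.
move=> cphi hv.
have [c c01 pc] : exists2 c, c \in `[0, 1] & phi c = v.
  apply: IVT => //.
  case: hv => /andP[h1 h2]; apply/andP; split.
  - by rewrite ge_min (ltW h1).
  - by rewrite le_max (ltW h2) orbT.
  - by rewrite ge_min (ltW h1) orbT.
  - by rewrite le_max (ltW h2).
exists c; split => //.
move: c01; rewrite in_itv /= => /andP[c0 c1].
have cn0 : c != 0.
  apply/eqP => c0'; move: hv; rewrite -pc c0'.
  by case => /andP[h1 h2]; [move: h1|move: h2]; rewrite ltxx.
have cn1 : c != 1.
  apply/eqP => c1'; move: hv; rewrite -pc c1'.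
  by case => /andP[h1 h2]; [move: h2|move: h1]; rewrite ltxx.
by rewrite !lt_neqAle eq_sym cn0 cn1 c0 c1.
Qed.

Lemma find_c (phi : R -> R) (omega : int) (p q : R) : cw phi ->
  phi 1 = phi 0 + 2 * pi * omega%:~R -> omega != 0 -> (p != 0) || (q != 0) ->
  exists c, 0 < c < 1 /\ q * cos (phi c) - p * sin (phi c) != 0.
Proof.
move=> cphi e1 om0 pq.
pose h y := q * cos y - p * sin y.
have pq0 : 0 < p ^+ 2 + q ^+ 2.
  have p2 := sqr_ge0 p; have q2 := sqr_ge0 q.
  case/orP: pq => [p0|q0].
    have : 0 < p ^+ 2 by rewrite lt_neqAle sqr_ge0 andbT eq_sym sqrf_eq0.
    lra.
  have : 0 < q ^+ 2 by rewrite lt_neqAle sqr_ge0 andbT eq_sym sqrf_eq0.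
  lra.
have key : forall y,
    (phi 0 < y < phi 1) \/ (phi 1 < y < phi 0) ->
    (phi 0 < y + pi / 2 < phi 1) \/ (phi 1 < y + pi / 2 < phi 0) ->
  exists c, 0 < c < 1 /\ h (phi c) != 0.
  move=> y b1 b2; have := h_pihalf p q y; rewrite -/(h y) -/(h (y + pi / 2)).
  have [hy|hy] := eqVneq (h y) 0.
    have [hy2|hy2] := eqVneq (h (y + pi / 2)) 0.
      by rewrite hy hy2 expr0n /= addr0 => e; move: pq0; rewrite -e ltxx.
    by move=> _; have [c [c01 pc]] := hit cphi b2; exists c; rewrite pc.
  by move=> _; have [c [c01 pc]] := hit cphi b1; exists c; rewrite pc.
have pi0 := pi_gt0 R.
case: (ltgtP omega 0) => [oneg|opos|]; last by move/eqP: om0.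
- have W : 1 <= (- omega)%:~R :> R by rewrite ler1z -gtz0_ge1 oppr_gt0.
  move: W; rewrite mulrNz => W.
  apply: (key (phi 0 - pi)); right; apply/andP; rewrite e1; split; nra.
- have W : 1 <= omega%:~R :> R by rewrite ler1z -gtz0_ge1.
  apply: (key (phi 0 + pi / 2)); left; apply/andP; rewrite e1; split; nra.
Qed.


Lemma L2_int u : L2_0 u -> mu.-integrable `[0%R, 1%R] (EFin \o u).
Proof.
case=> mu_ [i2 _].
apply: (@le_integrable _ _ _ mu _ _ (EFin \o u) (fun x => (1 + u x ^+ 2)%:E)) => //.
- exact/measurable_EFinP.
- move=> x _; rewrite /comp (abse_EFin (u x)) (abse_EFin (1 + u x ^+ 2)) lee_fin [X in _ <= X]ger0_norm; last first.
    by have := sqr_ge0 (u x); lra.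
  rewrite ler_norml; have := sqr_ge0 (u x - 1); have := sqr_ge0 (u x + 1).
  rewrite !sqrrD !sqrrN; move=> *; apply/andP; split; nra.
- have ih : mu.-integrable `[0%R, 1%R] ((fun x => 1%:E) \+ (fun x => (u x ^+ 2)%:E)).
    by apply: integrableD => //; exact: (cw_int (@cwC 1)).
  apply: eq_integrable ih => //.
Qed.

Lemma Rlin_sub s f g (a b : R) : 0 <= s <= 1 -> cw f -> cw g ->
  Rintegral mu `[0%R, s] (fun x => a * f x + b * g x) =
  a * Rintegral mu `[0%R, s] f + b * Rintegral mu `[0%R, s] g.
Proof.
move=> /andP[s0 s1] cf cg.
have sub : (`[0%R, s] : set R) `<=` `[0%R, 1%R].
  by apply: subset_itvl; rewrite bnd_simp.
have iS h : cw h -> mu.-integrable `[0%R, s] (EFin \o h).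
  by move=> ch; apply: (@integrableS _ _ _ mu _ _ _ _ _ sub (cw_int ch)).
rewrite RintegralD //; last 2 first.
- exact/iS/cwZ.
- exact/iS/cwZ.
by rewrite !RintegralZl //; exact: iS.
Qed.

Lemma prim_lin f g (a b : R) s : 0 <= s <= 1 -> cw f -> cw g ->
  prim (fun x => a * f x + b * g x) s = a * prim f s + b * prim g s.
Proof. by move=> s01 cf cg; rewrite /prim Rlin_sub. Qed.

Lemma cw_Pmz_int f : mu.-integrable `[0%R, 1%R] (EFin \o f) -> cw (Pmz f).
Proof.
move=> cf; rewrite /Pmz; apply: cwD; first exact/cw_prim.
exact: cwC.
Qed.

Lemma cw_Pmz f : cw f -> cw (Pmz f).
Proof.
move=> cf; rewrite /Pmz; apply: cwD; first exact/cw_prim/cw_int.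
exact: cwC.
Qed.

Lemma Pmz_lin f g (a b : R) s : 0 <= s <= 1 -> cw f -> cw g ->
  Pmz (fun x => a * f x + b * g x) s = a * Pmz f s + b * Pmz g s.
Proof.
move=> s01 cf cg; rewrite /Pmz prim_lin //.
have cpf := cw_prim (cw_int cf); have cpg := cw_prim (cw_int cg).
rewrite (@eq_Rintegral _ _ _ mu _ (fun x => a * prim f x + b * prim g x)); last first.
  by move=> x; rewrite /I01 inE /= in_itv /= => x01; exact: prim_lin.
rewrite /I01 Rlin //; ring.
Qed.

Lemma T_lin (h : R -> R) f g (a b : R) : cw h -> cw f -> cw g ->
  Rintegral mu `[0%R, 1%R] (fun s => h s * Pmz (fun x => a * f x + b * g x) s) =
  a * Rintegral mu `[0%R, 1%R] (fun s => h s * Pmz f s) +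
  b * Rintegral mu `[0%R, 1%R] (fun s => h s * Pmz g s).
Proof.
move=> ch cf cg.
rewrite (@eq_Rintegral _ _ _ mu _ (fun s => a * (h s * Pmz f s) + b * (h s * Pmz g s))); last first.
  by move=> x /set_mem; rewrite /= in_itv /= => x01; rewrite Pmz_lin //; ring.
by rewrite Rlin //; apply: cwM => //; exact: cw_Pmz.
Qed.


Lemma cw_phase omega u : L2_0 u -> cw (phase omega u).
Proof.
move=> Lu; rewrite /phase; apply: cwD.
  by apply: cwZ; exact: cwid.
exact: (cw_Pmz_int (L2_int Lu)).
Qed.


Lemma sq_loc_zero h : cw h -> (forall x, 0 <= h x) ->
  Rintegral mu `[0%R, 1%R] h = 0 -> forall c, 0 < c < 1 -> h c = 0.
Proof.
move=> ch h0 i0 c c01.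
have K0 : forall y, 0 < y < 1 -> prim h y = 0.
  move=> y /andP[y0 y1]; apply/eqP; rewrite eq_le; apply/andP; split; last first.
    by apply: Rintegral_ge0 => x _; exact: h0.
  have := @Rintegral_itvB R h (BLeft 0) (BRight 1) y (cw_int ch).
  rewrite !bnd_simp (ltW y0) (ltW y1) => /(_ isT isT).
  rewrite i0 /prim => e.
  have : 0 <= Rintegral mu [set` Interval (BRight y) (BRight 1)] h.
    by apply: Rintegral_ge0 => x _; exact: h0.
  rewrite -e; lra.
have [_ <-] := deriv_prim ch c01.
exact: (deriv_loc_cst c01 K0).
Qed.


End H.

Section H2.
Variable R : realType.
Notation mu := (@lebesgue_measure R).
Implicit Types (f : R -> R).
Lemma lemA (omega : int) (u : R -> R) (p q : R) : omega != 0 -> L2_0 u ->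
  closure_map omega u = (0, 0) -> (p != 0) || (q != 0) ->
  exists w, good w /\
    q * Rintegral mu `[0%R, 1%R] (fun s => cos (phase omega u s) * Pmz w s)
    - p * Rintegral mu `[0%R, 1%R] (fun s => sin (phase omega u s) * Pmz w s) != 0.
Proof.
move=> om0 Lu cl pq.
have iu := L2_int Lu.
have cph := @cw_phase R omega u Lu.
set ph := phase omega u in cph *.
have e1 : ph 1 = ph 0 + 2 * pi * omega%:~R.
  rewrite /ph /phase /Pmz prim0.
  have -> : prim u 1 = 0 by case: Lu => _ [_]; rewrite /prim /I01.
  ring.
case: cl; rewrite /closure_map -/ph /I01 => icos isin.
have ccos := cwcos cph; have csin := cwsin cph.
pose g s := q * cos (ph s) + (- p) * sin (ph s).
have cg : cw g by apply: cwL.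
have ig : Rintegral mu `[0%R, 1%R] g = 0.
  by rewrite /g Rlin // icos isin !mulr0 addr0.
pose G := prim g.
have cG : cw G := cw_prim (cw_int cg).
pose m := Rintegral mu `[0%R, 1%R] G.
pose w s := G s - m.
have cw_w : cw w by apply: cwD => //; exact: cwC.
have gw : good w.
  split => //.
  rewrite (@eq_Rintegral _ _ _ mu _ (fun s => 1 * G s + (- m) * 1)); last first.
    by move=> x _; rewrite /w mul1r mulr1.
  by rewrite Rlin //; [rewrite Rcst mul1r mulr1 subrr|exact: cwC].
exists w; split => //.
have cP : cw (Pmz w) := cw_Pmz cw_w.
have cpw : cw (prim w) := cw_prim (cw_int cw_w).
pose A := Rintegral mu `[0%R, 1%R] (fun s => cos (ph s) * Pmz w s).
pose B := Rintegral mu `[0%R, 1%R] (fun s => sin (ph s) * Pmz w s).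
suff : q * A - p * B != 0 by [].
have S1 : Rintegral mu `[0%R, 1%R] (fun s => g s * Pmz w s) = q * A + - p * B.
  rewrite (@eq_Rintegral _ _ _ mu _ (fun s => q * (cos (ph s) * Pmz w s) + (- p) * (sin (ph s) * Pmz w s))); last first.
    by move=> x _; rewrite /g mulrDl !mulrA.
  by rewrite (@Rlin R _ _ q (-p) (cwM ccos cP) (cwM csin cP)).
pose c0 := Rintegral mu `[0%R, 1%R] (prim w).
have S2 : Rintegral mu `[0%R, 1%R] (fun s => g s * Pmz w s) =
    Rintegral mu `[0%R, 1%R] (fun s => prim w s * g s).
  rewrite (@eq_Rintegral _ _ _ mu _ (fun s => 1 * (prim w s * g s) + (- c0) * g s)); last first.
    by move=> x _; rewrite /Pmz mulrBr mul1r mulNr (mulrC c0) (mulrC (g x)).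
  by rewrite Rlin //; [rewrite ig mulr0 addr0 mul1r|apply: cwM].
have D1 : {in `]0%R, 1%R[, derive1 (prim w) =1 w}.
  by move=> x; rewrite in_itv /= => x01; exact: (deriv_prim cw_w x01).2.
have D2 : {in `]0%R, 1%R[, derive1 G =1 g}.
  by move=> x; rewrite in_itv /= => x01; exact: (deriv_prim cg x01).2.
have S3 := Rintegration_by_parts ltr01 cw_w (LR_prim cw_w) D1 cg (LR_prim cg) D2.
have G1 : G 1 = 0 by exact: ig.
rewrite !prim0 -/G G1 mulr0 mul0r subrr sub0r in S3.
have S4 : Rintegral mu `[0%R, 1%R] (fun x => w x * G x) =
    Rintegral mu `[0%R, 1%R] (fun x => w x * w x).
  rewrite (@eq_Rintegral _ _ _ mu _ (fun x => 1 * (w x * w x) + m * w x)); last first.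
    by move=> x _; rewrite /w mul1r -mulrDl subrK mulrC.
  by rewrite (@Rlin R (fun x => w x * w x) w 1 m (cwM cw_w cw_w) cw_w) gw.2 mulr0 addr0 mul1r.
have -> : q * A - p * B = - Rintegral mu `[0%R, 1%R] (fun x => w x * w x).
  by rewrite -S4 -S3 -S2 S1 mulNr.
rewrite oppr_eq0; apply/negP => /eqP W0.
have w0 : forall c, 0 < c < 1 -> w c = 0.
  move=> c c01.
  have hpos : forall x, 0 <= w x * w x by move=> x; rewrite -expr2; exact: sqr_ge0.
  have := @sq_loc_zero R (fun x => w x * w x) (cwM cw_w cw_w) hpos W0 c c01.
  by move/eqP; rewrite mulf_eq0 orbb => /eqP.
have g0 : forall c, 0 < c < 1 -> g c = 0.
  move=> c c01; have [_ <-] := deriv_prim cg c01.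
  apply: (deriv_loc_cst (k := m) c01) => y y01.
  by have := w0 y y01; rewrite /w => /eqP; rewrite subr_eq0 => /eqP.
have [c [c01 hc]] := find_c cph e1 om0 pq.
by move: hc; rewrite -mulNr -/(g c) g0 // eqxx.
Qed.

End H2.

Theorem mainTheorem9 (R : realType) (omega : int) (u : R -> R) :
  omega != 0 -> L2_0 u -> closure_map omega u = (0, 0) ->
  forall z : R * R, exists w : R -> R, L2_0 w /\ dclosure_map omega u w = z.
Proof.
move=> om0 Lu cl [z1 z2].
pose A w := Rintegral (@lebesgue_measure R) `[0%R, 1%R]%classic
  (fun s => sin (phase omega u s) * Pmz w s).
pose B w := Rintegral (@lebesgue_measure R) `[0%R, 1%R]%classic
  (fun s => cos (phase omega u s) * Pmz w s).
have [w1 [g1 h1]] := @lemA R omega u 0 1 om0 Lu cl (ltac:(by rewrite oner_neq0 orbT)).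
rewrite -/(A w1) -/(B w1) mul1r mul0r subr0 in h1.
have [w2 [g2 h2]] := @lemA R omega u (B w1) (A w1) om0 Lu cl (ltac:(by rewrite h1)).
rewrite -/(A w2) -/(B w2) in h2.
have cph := @cw_phase R omega u Lu.
pose D := A w1 * B w2 - B w1 * A w2.
pose al := (- z1 * B w2 - z2 * A w2) / D.
pose be := (A w1 * z2 + B w1 * z1) / D.
exists (fun x => al * w1 x + be * w2 x); split.
  exact: good_L2 (goodL al be g1 g2).
rewrite /dclosure_map /I01.
rewrite (@T_lin R (fun s => sin (phase omega u s)) w1 w2 al be (cwsin cph) (proj1 g1) (proj1 g2)).
rewrite (@T_lin R (fun s => cos (phase omega u s)) w1 w2 al be (cwcos cph) (proj1 g1) (proj1 g2)).
rewrite -/(A w1) -/(A w2) -/(B w1) -/(B w2).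
move: h2; rewrite /al /be /D.
move: (A w1) (A w2) (B w1) (B w2) => a1 a2 b1 b2 hD.
congr pair; field; exact: hD.
Qed.
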